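(* Let $G=(V,A)$ be a graph and $\mathfrak n=\mathfrak n(G)$ as below, and let $S:W^*\to W$ be an antisymmetric linear map with $T_\alpha ST_\beta+T_\beta ST_\alpha=0$ for all $\alpha,\beta\in A$. Write $S_{i,j}$ for its matrix entries with respect to the bases $\{e_i^*\}$ of $W^*$ and $\{e_i\}$ of $W$. Then: (1) if there is an edge joining $e_i$ and $e_j$, then $S_{i,j}=0$; (2) if there are edges $\alpha$ joining $e_i$ and $e_{i'}$ and $\beta$ joining $e_j$ and $e_{j'}$ with $\{i,i'\}\cap\{j,j'\}=\emptyset$, then $S_{i,j}=0$.
   Context: $G=(V,A)$ is a finite simple graph without loops and without isolated vertices, $V=\{e_1,\dots,e_n\}$ ordered, each edge joining $e_i,e_j$ ($i<j$) oriented from $e_i$ to $e_j$. $\mathfrak n(G)$ has basis $V\cup A$, $[e_i,e_j]=\alpha$ if $\alpha$ goes from $e_i$ to $e_j$, $[e_i,e_j]=0$ if not adjacent, edges central; $W=\mathrm{span}(V)$, center $\mathfrak z=\mathrm{span}(A)$. For $\alpha\in A$ define $T_\alpha:W\to W^*$ by $[v,w]=\sum_{\alpha}T_\alpha(v)(w)\alpha$; explicitly, if $\alpha$ joins $e_i$ to $e_j$ with $i<j$, then $T_\alpha(e_i)=e_j^*$, $T_\alpha(e_j)=-e_i^*$, $T_\alpha(e_k)=0$ for $k\ne i,j$. $S$ antisymmetric means $S^t=-S$ under $W^{**}\cong W$. *)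

(* Defs.v *)
From HB Require Import structures.
From mathcomp Require Import all_boot all_order all_algebra.
Set Implicit Arguments. Unset Strict Implicit. Unset Printing Implicit Defensive.
Import Order.TTheory GRing.Theory Num.Theory.
Local Open Scope ring_scope.

(* A finite simple graph on vertex set V = {e_0,...,e_{n-1}} (indexed by 'I_n,
   ordered by the order of 'I_n) is an adjacency relation that is symmetric,
   irreflexive (no loops), with no isolated vertices. *)
Definition simple_graph (n : nat) (adj : rel 'I_n) : Prop :=
  [/\ symmetric adj, irreflexive adj & forall i : 'I_n, exists j, adj i j].

(* Matrix of T_alpha : W -> W^* w.r.t. bases {e_k} of W and {e_k^*} of W^*,
   for the edge alpha joining e_i and e_j, oriented from the smaller index to
   the larger. Column k is the coordinate vector of T_alpha(e_k).
   For i < j: T(e_i) = e_j^*, T(e_j) = - e_i^*, T(e_k) = 0 otherwise. *)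
Definition Tmx (F : fieldType) (n : nat) (i j : 'I_n) : 'M[F]_n :=
  if (i < j)%N then delta_mx j i - delta_mx i j
  else delta_mx i j - delta_mx j i.

(* Main.v *)
Require Import Defs.
From HB Require Import structures.
From mathcomp Require Import all_boot all_order all_algebra.
From mathcomp Require Import ring.
Import GRing.Theory.
Local Open Scope ring_scope.

Lemma dSd (F : fieldType) n (S : 'M[F]_n) (a b c d p q : 'I_n) :
  (delta_mx a b *m S *m delta_mx c d) p q = ((p == a) && (q == d))%:R * S b c.
Proof.
rewrite mxE (bigD1 c) //= big1 => [|k kc]; last first.
  by rewrite [delta_mx _ _ _ _]mxE (negbTE kc) /= mulr0.
rewrite mxE (bigD1 b) //= big1 => [|k kb]; last first.
  by rewrite [delta_mx _ _ _ _]mxE (negbTE kb) andbF mul0r.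
rewrite !mxE !eqxx !addr0 /=; case: (p == a); case: (q == d) => /=;
  rewrite ?mulr1 ?mul1r ?mulr0 ?mul0r //.
Qed.

Definition A (F : fieldType) {n} (i j : 'I_n) : 'M[F]_n := delta_mx j i - delta_mx i j.

Lemma TmxA (F : fieldType) {n} (i j : 'I_n) : exists s : F, s != 0 /\ Tmx F i j = s *: A F i j.
Proof.
rewrite /Tmx /A; case: ifP => _.
  by exists 1; rewrite oner_neq0 scale1r.
exists (-1); rewrite oppr_eq0 oner_neq0 scaleN1r opprB; split => //.
Qed.

Lemma subE (F : fieldType) n (M N : 'M[F]_n) (p q : 'I_n) : (M - N) p q = M p q - N p q.
Proof. by rewrite !mxE. Qed.

Lemma addE (F : fieldType) n (M N : 'M[F]_n) (p q : 'I_n) : (M + N) p q = M p q + N p q.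
Proof. by rewrite !mxE. Qed.

Lemma ASA (F : fieldType) n (S : 'M[F]_n) (i j k l p q : 'I_n) :
  (A F i j *m S *m A F k l) p q =
    ((p == j) && (q == k))%:R * S i l - ((p == j) && (q == l))%:R * S i k
  - ((p == i) && (q == k))%:R * S j l + ((p == i) && (q == l))%:R * S j k.
Proof.
rewrite /A !mulmxBl !mulmxBr !subE !dSd; ring.
Qed.

Lemma key {F : fieldType} {n} {S : 'M[F]_n} {i j k l : 'I_n} :
  Tmx F i j *m S *m Tmx F k l + Tmx F k l *m S *m Tmx F i j = 0 ->
  A F i j *m S *m A F k l + A F k l *m S *m A F i j = 0.
Proof.
have [s [s0 ->]] := TmxA F i j; have [t [t0 ->]] := TmxA F k l.
rewrite -!scalemxAl -!scalemxAr !scalerA (mulrC t s) -scalerDr => /eqP.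
by rewrite scaler_eq0 mulf_eq0 (negbTE s0) (negbTE t0) => /eqP.
Qed.

Theorem mainTheorem11 (F : fieldType) (n : nat) (adj : rel 'I_n)
  (HG : simple_graph adj) (H2 : (2 : F) != 0) (S : 'M[F]_n)
  (Santi : S^T = - S)
  (HS : forall i j k l : 'I_n, adj i j -> adj k l ->
          Tmx F i j *m S *m Tmx F k l + Tmx F k l *m S *m Tmx F i j = 0) :
  (forall i j : 'I_n, adj i j -> S i j = 0) /\
  (forall i i' j j' : 'I_n, adj i i' -> adj j j' ->
     [&& i != j, i != j', i' != j & i' != j'] -> S i j = 0).
Proof.
case: HG => _ irr _; split.
  move=> i j hij.
  have ij : (i == j) = false by apply/negbTE/eqP => E; move: hij; rewrite E irr.
  have := congr1 (fun M : 'M[F]_n => M j i) (key (HS _ _ _ _ hij hij)).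
  rewrite addE !ASA !mxE !eqxx (eq_sym j i) ij /= !mul1r !mul0r !subr0 !addr0 -mulr2n => /eqP.
  by rewrite -mulr_natr mulf_eq0 (negbTE H2) orbF => /eqP.
move=> i i' j j' h1 h2 /and4P[a b c d].
have ii : (i == i') = false by apply/negbTE/eqP => E; move: h1; rewrite E irr.
have jj : (j == j') = false by apply/negbTE/eqP => E; move: h2; rewrite E irr.
have := congr1 (fun M : 'M[F]_n => M i' j') (key (HS _ _ _ _ h1 h2)).
have a' := negbTE a; have b' := negbTE b; have c' := negbTE c; have d' := negbTE d.
have a2 : (j == i) = false by rewrite eq_sym.
have b2 : (j' == i) = false by rewrite eq_sym.
have c2 : (j == i') = false by rewrite eq_sym.
have d2 : (j' == i') = false by rewrite eq_sym.
have ii2 : (i' == i) = false by rewrite eq_sym.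
have jj2 : (j' == j) = false by rewrite eq_sym.
rewrite addE !ASA !mxE !eqxx ?a' ?b' ?c' ?d' ?a2 ?b2 ?c2 ?d2 ?ii ?jj ?ii2 ?jj2 /=.
rewrite !mul0r !mul1r ?subr0 ?addr0 ?sub0r ?add0r => /eqP; rewrite oppr_eq0 => /eqP //.
Qed.
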